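(* Let $f : \widehat{\mathbb{Z}} \to \widehat{\mathbb{Z}}$ be congruence preserving and $s \in \widehat{\mathbb{Z}}$. Then the map $f{\Uparrow}_s : \widehat{\mathbb{Z}} \to \widehat{\mathbb{Z}}$ is profinite preperiodic. Moreover, if $f$ is tower-stable, then for every $t \in \widehat{\mathbb{Z}}$ the map $(f{\Uparrow}_s){\Uparrow}_t : \widehat{\mathbb{Z}} \to \widehat{\mathbb{Z}}$ is constant, and this constant is independent of $t$.
   Context: $\mathbb{N}=\{1,2,\dots\}$, $\widehat{\mathbb{Z}} = \varprojlim_n \mathbb{Z}/n\mathbb{Z}$; $s\equiv_n t$ means $s-t\in n\widehat{\mathbb{Z}}$; $\widehat{\cdot}:\mathbb{N}\to\widehat{\mathbb{Z}}$ is the natural embedding. A continuous $f$ is congruence preserving if $s\equiv_n t$ implies $f(s)\equiv_n f(t)$ for all $s,t$, $n$; it then induces reductions $f_n:\mathbb{Z}/n\mathbb{Z}\to\mathbb{Z}/n\mathbb{Z}$; $\lambda_f(n)$ is the period of $f_n$ (lcm of the cycle lengths of all points, the cycle length of $x$ being the least $l\ge1$ with $f_n^k(x)=f_n^{k+l}(x)$ for some $k\ge0$). $f$ is tower-stable if for every prime $p$ the largest prime-power divisor of $\lambda_f(p)$ is $< p$ (equivalently, $f_p$ is not a cyclic permutation of length $p$). A continuous map $g:\widehat{\mathbb{Z}}\to\widehat{\mathbb{Z}}$ is profinite preperiodic if for every $x\in\widehat{\mathbb{Z}}$, every $u\in\widehat{\mathbb{Z}}$ and every sequence of positive integers $n_i\to+\infty$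 in $\mathbb{R}$ with $\widehat{n_i}\to u$ in $\widehat{\mathbb{Z}}$, the limit $\lim_i g^{n_i}(x)$ exists and depends only on $u$; in that case $g{\Uparrow}_x:\widehat{\mathbb{Z}}\to\widehat{\mathbb{Z}}$ denotes the (continuous) map $u \mapsto \lim_i g^{n_i}(x)$. Congruence preserving maps are profinite preperiodic, so $f{\Uparrow}_s$ is defined. *)

(* Defs.v *)
From mathcomp Require Import all_boot.
From mathcomp Require Import boolp.
Set Implicit Arguments. Unset Strict Implicit. Unset Printing Implicit Defensive.

(* The profinite integers: compatible systems of residues.
   zval x n (n >= 1) is the residue of x modulo n, in [0, n);
   zval x 0 is normalized to 0. *)
Record zhat := ZHat {
  zval : nat -> nat;
  zval0 : zval 0 = 0;
  zval_lt : forall n, 0 < n -> zval n < n;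
  zval_compat : forall d n, 0 < n -> d %| n -> zval n %% d = zval d }.

Definition hat_fun (k : nat) : nat -> nat :=
  fun n => if n is 0 then 0 else k %% n.

Lemma hat_fun0 k : hat_fun k 0 = 0. Proof. by []. Qed.
Lemma hat_fun_lt k n : 0 < n -> hat_fun k n < n.
Proof. by case: n => // n _; rewrite /= ltn_mod. Qed.
Lemma hat_fun_compat k d n : 0 < n -> d %| n -> hat_fun k n %% d = hat_fun k d.
Proof.
case: n => // n _; case: d => [|d] Hd.
  by rewrite dvd0n in Hd.
by rewrite /= modn_dvdm.
Qed.

Definition hat (k : nat) : zhat :=
  ZHat (hat_fun0 k) (@hat_fun_lt k) (@hat_fun_compat k).

(* s ≡_n t, i.e. s - t ∈ n Zhat, i.e. s and t have the same residue mod n. *)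
Definition zcong (n : nat) (s t : zhat) : Prop := zval s n = zval t n.

(* Continuity for the profinite topology (basic opens: x + m Zhat). *)
Definition zcontinuous (g : zhat -> zhat) : Prop :=
  forall x n, 0 < n -> exists m, 0 < m /\
    forall y, zcong m y x -> zcong n (g y) (g x).

Definition zconv (a : nat -> zhat) (L : zhat) : Prop :=
  forall n, 0 < n -> exists N, forall i, N <= i -> zcong n (a i) L.

Definition to_infty (ni : nat -> nat) : Prop :=
  forall M, exists N, forall i, N <= i -> M <= ni i.

Definition cong_preserving (f : zhat -> zhat) : Prop :=
  zcontinuous f /\
  forall n s t, 0 < n -> zcong n s t -> zcong n (f s) (f t).

Definition pp_limit (g : zhat -> zhat) (x u L : zhat) : Prop :=
  forall ni : nat -> nat, (forall i, 0 < ni i) -> to_infty ni ->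
    zconv (fun i => hat (ni i)) u -> zconv (fun i => iter (ni i) g x) L.

Definition profinite_preperiodic (g : zhat -> zhat) : Prop :=
  zcontinuous g /\ forall x u, exists L, pp_limit g x u L.

(* g⇑_x : u |-> lim_i g^{n_i}(x)  (chosen classically; meaningful when g is
   profinite preperiodic, where the limit exists and is unique). *)
Definition up (g : zhat -> zhat) (x : zhat) : zhat -> zhat :=
  fun u => match pselect (exists L, pp_limit g x u L) with
           | left H => projT1 (cid H)
           | right _ => x
           end.

(* The reduction f_n : Z/nZ -> Z/nZ, on representatives 0 <= y < n. *)
Definition fred (f : zhat -> zhat) (n : nat) (y : nat) : nat := zval (f (hat y)) n.

(* Cycle length of y under h: least l >= 1 with h^k y = h^(k+l) y for some k.
   (Such l always exists for a self-map of a finite set; the fallback 0 is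
   never used in that case.) *)
Definition cyc_pred (h : nat -> nat) (y : nat) : pred nat :=
  fun l => (0 < l) && `[< exists k, iter k h y = iter (k + l) h y >].

Definition cycle_length (h : nat -> nat) (y : nat) : nat :=
  match pselect (exists l, cyc_pred h y l) with
  | left H => ex_minn H
  | right _ => 0
  end.

Definition period (f : zhat -> zhat) (n : nat) : nat :=
  \big[lcmn/1]_(y < n) cycle_length (fred f n) y.

(* Tower-stable: for every prime p, every prime-power divisor q^e (e >= 1)
   of lambda_f(p) is < p (i.e. the largest one is < p). *)
Definition tower_stable (f : zhat -> zhat) : Prop :=
  forall p, prime p -> forall q e, prime q -> 0 < e ->
    q ^ e %| period f p -> q ^ e < p.

(* Main.v *)
Require Import Defs.
From mathcomp Require Import all_boot.
From mathcomp Require Import boolp zify.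
Set Implicit Arguments. Unset Strict Implicit. Unset Printing Implicit Defensive.

Lemma zhat_ext (x y : zhat) : (forall n, zval x n = zval y n) -> x = y.
Proof.
case: x => zx x0 xl xc; case: y => zy y0 yl yc /= H.
have E : zx = zy by apply: funext.
subst zy; congr ZHat; apply: Prop_irrelevance.
Qed.

Lemma hatE k n : 0 < n -> zval (hat k) n = k %% n.
Proof. by case: n. Qed.

Lemma inj_le (a : nat -> nat) n m : (forall i, i < n -> a i < m) ->
  (forall i j, i < n -> j < n -> a i = a j -> i = j) -> n <= m.
Proof.
move=> Ha Hi.
pose g (i : 'I_n) : 'I_m := Ordinal (Ha i (ltn_ord i)).
have : injective g.
  move=> i j /(congr1 val) /= E; apply: val_inj => /=.
  exact: Hi (ltn_ord i) (ltn_ord j) E.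
by move/leq_card; rewrite !card_ord.
Qed.

Lemma surj_le (a : nat -> nat) n m : (forall i, i < n -> a i < m) ->
  (forall z, z < m -> exists i, i < n /\ a i = z) -> m <= n.
Proof.
move=> Ha Hs.
pose g (i : 'I_n) : 'I_m := Ordinal (Ha i (ltn_ord i)).
have S : [set: 'I_m] \subset [set g x | x in [set: 'I_n]].
  apply/subsetP => z _; have [i [ilt E]] := Hs z (ltn_ord z).
  apply/imsetP; exists (Ordinal ilt); first by rewrite in_setT.
  by apply: val_inj => /=.
have := subset_leq_card S; rewrite cardsT card_ord => H.
apply: leq_trans H _; apply: leq_trans (leq_imset_card _ _) _.
by rewrite cardsT card_ord.
Qed.

Lemma inj_surj (a : nat -> nat) n : (forall i, i < n -> a i < n) ->
  (forall i j, i < n -> j < n -> a i = a j -> i = j) ->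
  forall z, z < n -> exists i, i < n /\ a i = z.
Proof.
move=> Ha Hi z zn.
pose g (i : 'I_n) : 'I_n := Ordinal (Ha i (ltn_ord i)).
have gi : injective g.
  move=> i j /(congr1 val) /= E; apply: val_inj => /=.
  exact: Hi (ltn_ord i) (ltn_ord j) E.
have := inj_card_onto gi (leqnn _) (Ordinal zn).
case/codomP => i /(congr1 val) /= E.
by exists i; split.
Qed.

Lemma pigeon (a : nat -> nat) n : (forall k, a k < n) ->
  exists i j, i < j <= n /\ a i = a j.
Proof.
move=> Ha; apply: contrapT => H.
have : n.+1 <= n.
  apply: (@inj_le a) => [i _|i j ilt jlt E]; first exact: Ha.
  case: (ltngtP i j) => // [ij|ji].
  - by exfalso; apply: H; exists i, j; split => //; rewrite ij /= -ltnS.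
  - by exfalso; apply: H; exists j, i; split => //; rewrite ji /= -ltnS.
by rewrite ltnn.
Qed.

Lemma per_eq T (a : nat -> T) k0 P : (forall k, k0 <= k -> a (k + P) = a k) ->
  forall A B, k0 <= A -> k0 <= B -> A %% P = B %% P -> a A = a B.
Proof.
move=> Hp.
have Hq : forall q A, k0 <= A -> a (A + q * P) = a A.
  elim=> [|q IH] A HA; first by rewrite mul0n addn0.
  have -> : A + q.+1 * P = (A + q * P) + P by rewrite mulSn; lia.
  by rewrite Hp ?IH //; lia.
move=> A B; wlog AB : A B / A <= B.
  move=> W HA HB E; case: (leqP A B) => [/W|/ltnW/W]; first exact.
  by move=> W'; symmetry; apply: W'.
move=> HA HB E.
have : P %| B - A by rewrite -eqn_mod_dvd // E.
case/dvdnP => q Eq.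
have -> : B = A + q * P by lia.
by symmetry; exact: Hq.
Qed.

Definition cs (u : zhat) (i : nat) : nat := zval u (i`!) + i`!.

Lemma cs_pos u i : 0 < cs u i.
Proof. by rewrite /cs addn_gt0 fact_gt0 orbT. Qed.

Lemma cs_ge u i : i <= cs u i.
Proof.
rewrite /cs; apply: leq_trans (leq_addl _ _).
case: i => // i; apply: dvdn_leq; first exact: fact_gt0.
by apply: dvdn_fact; rewrite /= leqnn.
Qed.

Lemma cs_inf u : to_infty (cs u).
Proof. by move=> M; exists M => i Hi; apply: leq_trans Hi (cs_ge u i). Qed.

Lemma cs_conv u : zconv (fun i => hat (cs u i)) u.
Proof.
move=> n n0; exists n => i Hi; rewrite /zcong hatE // /cs.
rewrite -modnDmr (eqP (_ : i`! %% n == 0)); last first.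
  by rewrite -/(dvdn n _) dvdn_fact // n0.
by rewrite addn0 zval_compat // ?fact_gt0 // dvdn_fact // n0.
Qed.

Lemma adm_ev (ni : nat -> nat) u P k0 : to_infty ni ->
  zconv (fun i => hat (ni i)) u -> 0 < P ->
  exists N, forall i, N <= i -> k0 <= ni i /\ ni i %% P = zval u P.
Proof.
move=> Hi Hc P0; have [N1 H1] := Hi k0; have [N2 H2] := Hc P P0.
exists (maxn N1 N2) => i Hi'; split; first by apply: H1; lia.
by rewrite -hatE //; apply: H2; lia.
Qed.

Lemma zlim (a : nat -> zhat) :
  (forall n, 0 < n -> exists N, forall i, N <= i -> zval (a i) n = zval (a N) n) ->
  exists L, zconv a L.
Proof.
move=> H.
have H' : forall n, exists N, 0 < n -> forall i, N <= i -> zval (a i) n = zval (a N) n.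
  move=> n; case: (posnP n) => [->|n0]; first by exists 0.
  by have [N HN] := H n n0; exists N.
have [Nf HN] := choice H'.
pose zv n := zval (a (Nf n)) n.
have zv0 : zv 0 = 0 by rewrite /zv zval0.
have zvl : forall n, 0 < n -> zv n < n by move=> n n0; exact: zval_lt.
have zvc : forall d n, 0 < n -> d %| n -> zv n %% d = zv d.
  move=> d n n0 dn; have d0 : 0 < d by apply: dvdn_gt0 dn.
  rewrite /zv -(HN n n0 (maxn (Nf n) (Nf d))) ?leq_maxl //.
  by rewrite zval_compat // (HN d d0) // leq_maxr.
exists (ZHat zv0 zvl zvc) => n n0; exists (Nf n) => i Hi.
by rewrite /zcong /= /zv HN.
Qed.

Lemma pp_of_periodic (g : zhat -> zhat) x :
  (forall n, 0 < n -> exists k0 P, 0 < P /\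
     forall k, k0 <= k -> zval (iter (k + P) g x) n = zval (iter k g x) n) ->
  forall u, exists L, pp_limit g x u L.
Proof.
move=> Hper u.
have [L HL] : exists L, zconv (fun i => iter (cs u i) g x) L.
  apply: zlim => n n0.
  have [k0 [P [P0 Hk]]] := Hper n n0.
  have [N HN] := adm_ev k0 (cs_inf u) (cs_conv u) P0.
  exists N => i Hi.
  have [A1 A2] := HN i Hi; have [B1 B2] := HN N (leqnn N).
  apply: (per_eq (a := fun k => zval (iter k g x) n) Hk) => //.
  by rewrite A2 B2.
exists L => ni _ Hinf Hc n n0.
have [k0 [P [P0 Hk]]] := Hper n n0.
have [N1 H1] := adm_ev k0 Hinf Hc P0.
have [N2 H2] := adm_ev k0 (cs_inf u) (cs_conv u) P0.
have [N3 H3] := HL n n0.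
exists N1 => i Hi; rewrite /zcong -(H3 (maxn N2 N3)) ?leq_maxr //.
have [A1 A2] := H1 i Hi; have [B1 B2] := H2 (maxn N2 N3) (leq_maxl _ _).
apply: (per_eq (a := fun k => zval (iter k g x) n) Hk) => //.
by rewrite A2 B2.
Qed.

Lemma pp_unique g x u L1 L2 : pp_limit g x u L1 -> pp_limit g x u L2 -> L1 = L2.
Proof.
move=> H1 H2; apply: zhat_ext => n; case: (posnP n) => [->|n0]; first by rewrite !zval0.
have [N1 E1] := H1 _ (cs_pos u) (cs_inf u) (cs_conv u) n n0.
have [N2 E2] := H2 _ (cs_pos u) (cs_inf u) (cs_conv u) n n0.
rewrite -(E1 (maxn N1 N2)) ?leq_maxl // -(E2 (maxn N1 N2)) ?leq_maxr //.
Qed.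

Lemma up_spec g x u : (exists L, pp_limit g x u L) -> pp_limit g x u (up g x u).
Proof.
move=> H; rewrite /up; case: pselect => // H'.
by case: (cid H') => L HL /=.
Qed.

Lemma zval_hat_zval x n : 0 < n -> zval (hat (zval x n)) n = zval x n.
Proof. by move=> n0; rewrite hatE // modn_small // zval_lt. Qed.

Lemma per_gen (G : zhat -> zhat) (M : nat -> nat) :
  (forall n, 0 < n -> 0 < M n /\ M n <= n) ->
  (forall n u v, 0 < n -> zval u (M n) = zval v (M n) -> zval (G u) n = zval (G v) n) ->
  forall n, 0 < n -> forall t, exists k0 P, 0 < P /\
     forall k, k0 <= k -> zval (iter (k + P) G t) n = zval (iter k G t) n.
Proof.
move=> HM HD n; elim: n {-2}n (leqnn n) => [|N IH] n Hn n0 t; first by lia.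
have [M0 Mn] := HM n n0.
case: (ltnP (M n) n) => Mlt.
  have HMN : M n <= N by lia.
  have [k0 [P [P0 Hk]]] := IH (M n) HMN M0 t.
  exists k0.+1, P; split => // k Hk0.
  have -> : k = (k.-1).+1 by lia.
  rewrite addSn !iterS; apply: HD => //; apply: Hk; lia.
have EM : M n = n by lia.
pose phi y := zval (G (hat y)) n.
pose a k := zval (iter k G t) n.
have aS : forall k, a k.+1 = phi (a k).
  move=> k; rewrite /a /phi iterS; apply: HD => //.
  by rewrite EM zval_hat_zval.
have aD : forall b r, a (r + b) = iter r phi (a b).
  by move=> b; elim=> [|r IHr] //; rewrite addSn aS IHr.
have [i [j [/andP [ij _] Eij]]] := pigeon (a := a) (n := n) (fun k => zval_lt _ n0).
exists i, (j - i); split; first by lia.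
move=> k Hk; rewrite -/(a _) -/(a _).
have -> : k + (j - i) = (k - i) + j by lia.
have -> : k = (k - i) + i by lia.
by rewrite !aD Eij addnK.
Qed.

Lemma const_gen (G : zhat -> zhat) (M : nat -> nat) :
  (forall n, 0 < n -> 0 < M n /\ M n <= n) ->
  (forall n u v, 0 < n -> zval u (M n) = zval v (M n) -> zval (G u) n = zval (G v) n) ->
  (forall n, 1 < n -> M n < n) ->
  forall n, 0 < n -> exists k0 v, forall t k, k0 <= k -> zval (iter k G t) n = v.
Proof.
move=> HM HD HS n; elim: n {-2}n (leqnn n) => [|N IH] n Hn n0; first by lia.
case: (ltnP 1 n) => n1; last first.
  exists 0, 0 => t k _; have := zval_lt (iter k G t) n0.
  have -> : n = 1 by lia.
  by rewrite ltnS leqn0 => /eqP.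
have [M0 Mn] := HM n n0; have Mlt := HS n n1.
have HMN : M n <= N by lia.
have [k0 [v Hv]] := IH (M n) HMN M0.
exists k0.+1, (zval (G (hat v)) n) => t k Hk.
have -> : k = (k.-1).+1 by lia.
rewrite iterS; apply: HD => //.
rewrite Hv ?hatE //; last by lia.
rewrite modn_small // -(Hv (hat 0) k0) //; exact: zval_lt.
Qed.

Lemma cl_spec (h : nat -> nat) y n : (forall k, iter k h y < n) ->
  [/\ cyc_pred h y (cycle_length h y), cycle_length h y <= n &
      forall l, cyc_pred h y l -> cycle_length h y <= l].
Proof.
move=> Hb.
have [i [j [/andP [ij jn] E]]] := pigeon Hb.
have Pl : cyc_pred h y (j - i).
  apply/andP; split; first by lia.
  by apply/asboolP; exists i; have -> : i + (j - i) = j by lia.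
rewrite /cycle_length; case: pselect => [H|H]; last by exfalso; apply: H; exists (j - i).
case: ex_minnP => m Pm Hm; split => //.
by apply: leq_trans (Hm _ Pl) _; lia.
Qed.

Lemma cyc_predE (h : nat -> nat) y l : cyc_pred h y l ->
  0 < l /\ exists k, iter k h y = iter (k + l) h y.
Proof. by case/andP => l0 /asboolP. Qed.

Lemma cyc_predI (h : nat -> nat) y l k : 0 < l -> iter k h y = iter (k + l) h y ->
  cyc_pred h y l.
Proof. by move=> l0 E; apply/andP; split => //; apply/asboolP; exists k. Qed.

Lemma per_from (h : nat -> nat) y k l : iter k h y = iter (k + l) h y ->
  forall k', k <= k' -> iter (k' + l) h y = iter k' h y.
Proof.
move=> E k' Hk.
have -> : k' + l = (k' - k) + (k + l) by lia.
by rewrite iterD -E -iterD; congr iter; lia.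
Qed.

Section F.
Variables (f : zhat -> zhat) (s : zhat).
Hypothesis Hf : cong_preserving f.

Lemma fE x n : 0 < n -> zval (f x) n = fred f n (zval x n).
Proof.
move=> n0; case: Hf => _ H; apply: H => //.
by rewrite /zcong zval_hat_zval.
Qed.

Lemma fred_lt n y : 0 < n -> fred f n y < n.
Proof. by move=> n0; exact: zval_lt. Qed.

Lemma iterfE k x n : 0 < n -> zval (iter k f x) n = iter k (fred f n) (zval x n).
Proof. by move=> n0; elim: k => [|k IH] //; rewrite !iterS fE // IH. Qed.

Lemma iter_lt n k y : 0 < n -> y < n -> iter k (fred f n) y < n.
Proof. by move=> n0 yn; case: k => [|k] //; rewrite iterS fred_lt. Qed.

Definition cc n := cycle_length (fred f n) (zval s n).

Lemma cc_props n : 0 < n -> [/\ 0 < cc n, cc n <= n &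
  exists k0, forall k, k0 <= k ->
    iter (k + cc n) (fred f n) (zval s n) = iter k (fred f n) (zval s n)].
Proof.
move=> n0.
have [P1 P2 _] := cl_spec (fun k => iter_lt k n0 (zval_lt s n0)).
have [c0 [k Ek]] := cyc_predE P1.
split => //; exists k; exact: per_from Ek.
Qed.

Definition F := up f s.

Lemma F_pp u : pp_limit f s u (F u).
Proof.
apply: up_spec; apply: pp_of_periodic => n n0.
have [c0 _ [k0 Hk]] := cc_props n0.
exists k0, (cc n); split => // k Hk0; rewrite !iterfE //; exact: Hk.
Qed.

Lemma F_dep n u v : 0 < n -> zval u (cc n) = zval v (cc n) ->
  zval (F u) n = zval (F v) n.
Proof.
move=> n0 E.
have [c0 _ [k0 Hk]] := cc_props n0.
have [N1 H1] := F_pp (cs_pos u) (cs_inf u) (cs_conv u) n0.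
have [N2 H2] := F_pp (cs_pos v) (cs_inf v) (cs_conv v) n0.
have [N3 H3] := adm_ev k0 (cs_inf u) (cs_conv u) c0.
have [N4 H4] := adm_ev k0 (cs_inf v) (cs_conv v) c0.
rewrite -(H1 (maxn N1 N3)) ?leq_maxl // -(H2 (maxn N2 N4)) ?leq_maxl //.
have [A1 A2] := H3 (maxn N1 N3) (leq_maxr _ _).
have [B1 B2] := H4 (maxn N2 N4) (leq_maxr _ _).
rewrite !iterfE //.
apply: (per_eq (a := fun k => iter k (fred f n) (zval s n)) Hk) => //.
by rewrite A2 B2.
Qed.

End F.

Section T.
Variables (f : zhat -> zhat) (s : zhat).
Hypothesis Hf : cong_preserving f.

Lemma red_p p m z : 0 < p -> 0 < m -> p %| m ->
  fred f p (z %% p) = fred f m z %% p.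
Proof.
move=> p0 m0 pm; rewrite /fred zval_compat //.
case: Hf => _ H; apply: H => //.
by rewrite /zcong !hatE // modn_mod.
Qed.

Lemma iter_red p m z r : 0 < p -> 0 < m -> p %| m ->
  iter r (fred f p) (z %% p) = iter r (fred f m) z %% p.
Proof.
move=> p0 m0 pm; elim: r => [|r IH] //.
by rewrite !iterS IH (red_p _ p0 m0 pm).
Qed.

Lemma iter_mul (h : nat -> nat) z P q : iter P h z = z -> iter (q * P) h z = z.
Proof.
move=> E; elim: q => [|q IH] //.
by rewrite mulSn iterD IH E.
Qed.

Lemma cc_lt : tower_stable f -> forall m, 1 < m -> cc f s m < m.
Proof.
move=> Ht m m1; have m0 : 0 < m by lia.
have [_ cle _] := cc_props f s m0.
rewrite ltn_neqAle cle andbT; apply/negP => /eqP Ecm.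
set h := fred f m; set y := zval s m.
have Hb : forall k, iter k h y < m by move=> k; apply: iter_lt; rewrite // zval_lt.
have [P1 _ Pmin] := cl_spec Hb.
rewrite /cc -/h -/y in Ecm; rewrite Ecm in P1 Pmin.
have [_ [k Ek]] := cyc_predE P1.
have Hper := per_from Ek.
have Heq : forall a b, a %% m = b %% m -> iter (k + a) h y = iter (k + b) h y.
  move=> a b E; apply: (per_eq (a := fun j => iter j h y) Hper); try lia.
  by rewrite -modnDmr E modnDmr.
have Hdist : forall i j, i < m -> j < m -> iter (k + i) h y = iter (k + j) h y -> i = j.
  have W : forall i j, i < j -> j < m -> iter (k + i) h y = iter (k + j) h y -> False.
    move=> i j ij jm E.
    have : m <= j - i.
      apply: Pmin; apply: (@cyc_predI _ _ _ (k + i)); first by lia.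
      by rewrite E; congr iter; lia.
    lia.
  move=> i j im jm E; case: (ltngtP i j) => // [ij|ji].
  - by exfalso; apply: (W i j).
  - by exfalso; apply: (W j i) => //.
have Hsurj := inj_surj (a := fun i => iter (k + i) h y) (fun i _ => Hb _) Hdist.
have [i0 [i0m E0]] := Hsurj 0 m0.
have orb : forall r, iter r h 0 = iter (k + (i0 + r)) h y.
  by move=> r; rewrite -E0 -iterD; congr iter; lia.
have hm0 : iter m h 0 = 0.
  by rewrite orb -E0; apply: Heq; rewrite modnDr.
have hall : forall z, z < m -> exists r, iter r h 0 = z.
  move=> z zm; have [i [im Ei]] := Hsurj z zm.
  exists (i + m - i0); rewrite orb -Ei; apply: Heq.
  have -> : i0 + (i + m - i0) = i + m by lia.
  by rewrite modnDr.
set p := pdiv m.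
have pp : prime p by apply: pdiv_prime.
have p0 : 0 < p by apply: prime_gt0.
have pm : p %| m by apply: pdiv_dvd.
have ple : p <= m by apply: dvdn_leq.
set hp := fred f p.
have red : forall r, iter r hp 0 = iter r h 0 %% p.
  by move=> r; rewrite -(iter_red _ _ p0 m0 pm) mod0n.
have hpm : iter m hp 0 = 0 by rewrite red hm0 mod0n.
have hpall : forall z, z < p -> exists r, iter r hp 0 = z.
  move=> z zp; have [r Er] := hall z (leq_trans zp ple).
  by exists r; rewrite red Er modn_small.
have Hbp : forall k, iter k hp 0 < p by move=> k'; apply: iter_lt.
have [Q1 _ Qmin] := cl_spec Hbp.
set C := cycle_length hp 0 in Q1 Qmin.
have [C0 [k' Ek']] := cyc_predE Q1.
have Hper' := per_from Ek'.
have hC : iter C hp 0 = 0.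
  have E1 : iter (k' * m) hp 0 = 0 by apply: iter_mul.
  have H2 : k' <= k' * m by rewrite leq_pmulr.
  have := Hper' (k' * m) H2; rewrite E1 addnC iterD E1 => -> //.
have hmod : forall a, iter a hp 0 = iter (a %% C) hp 0.
  move=> a; rewrite {1}(divn_eq a C) addnC iterD iter_mul //.
have Cp : C = p.
  apply/eqP; rewrite eqn_leq; apply/andP; split.
    apply: (@inj_le (fun i => iter i hp 0)) => // i j iC jC E.
    case: (ltngtP i j) => // [ij|ji]; exfalso.
    - have : C <= j - i.
        apply: Qmin; apply: (@cyc_predI _ _ _ i); first by lia.
        by rewrite E; congr iter; lia.
      lia.
    - have : C <= i - j.
        apply: Qmin; apply: (@cyc_predI _ _ _ j); first by lia.
        by rewrite -E; congr iter; lia.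
      lia.
  apply: (@surj_le (fun i => iter i hp 0)) => // z zp.
  have [r Er] := hpall z zp.
  by exists (r %% C); rewrite ltn_pmod // -hmod.
have Hd : p ^ 1 %| period f p.
  rewrite expn1 /period; apply: (@biglcmn_sup _ (Ordinal p0)) => //=.
  by rewrite -/hp -/C Cp.
have := Ht p pp p 1 pp (ltnSn 0) Hd.
by rewrite expn1 ltnn.
Qed.

End T.

Theorem theorem3p13 (f : zhat -> zhat) (s : zhat) :
  cong_preserving f ->
  profinite_preperiodic (up f s) /\
  (tower_stable f -> exists c : zhat, forall t u, up (up f s) t u = c).
Proof.
move=> Hf.
have HM : forall n, 0 < n -> 0 < cc f s n /\ cc f s n <= n.
  by move=> n n0; have [? ? _] := cc_props f s n0.
have HD : forall n u v, 0 < n -> zval u (cc f s n) = zval v (cc f s n) ->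
    zval (up f s u) n = zval (up f s v) n.
  by move=> n u v n0 E; apply: F_dep.
have Hex : forall x u, exists L, pp_limit (up f s) x u L.
  move=> x; apply: pp_of_periodic => n n0; exact: (per_gen HM HD n0).
split.
  split => // x n n0; exists (cc f s n); split; first by case: (HM n n0).
  by move=> y Hy; apply: HD.
move=> Ht.
have HC := const_gen HM HD (@cc_lt f s Hf Ht).
exists (up (up f s) (hat 0) (hat 0)).
have key : forall n, 0 < n -> exists v, forall t' u',
    zval (up (up f s) t' u') n = v.
  move=> n n0; have [k0 [v Hv]] := HC n n0; exists v => t u.
  have Hpp := up_spec (Hex t u).
  have [N HN] := Hpp _ (cs_pos u) (cs_inf u) (cs_conv u) n n0.
  rewrite -(HN (maxn N k0)) ?leq_maxl //; apply: Hv.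
  apply: leq_trans (cs_ge u _); exact: leq_maxr.
move=> t u; apply: zhat_ext => n; case: (posnP n) => [->|n0]; first by rewrite !zval0.
have [v Hv] := key n n0; by rewrite !Hv.
Qed.
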